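(* Let $G$ be a connected $m$-uniform hypergraph on $n$ vertices with matching number $\mu(G)$, having more than one edge. Then $s(G)\le m^{n-\mu(G)-2}$ and $\gamma(G)\le(n-\mu(G)-2)\mathrm{cl}(m)$.
   Context: A matching is a set of pairwise disjoint edges; $\mu(G)$ is the maximum size of a matching. Adjacency tensor $\mathcal{A}(G)$ (vertices $v_1,\dots,v_n$): $a_{i_1\cdots i_m}=\frac1{(m-1)!}$ if $\{v_{i_1},\dots,v_{i_m}\}$ is an edge, else $0$. For a tensor $\mathcal{A}$: eigenvectors $\mathcal{A}x^{m-1}=\lambda x^{[m-1]}$, $x\ne0$, $(\mathcal{A}x^{m-1})_i=\sum a_{ii_2\cdots i_m}x_{i_2}\cdots x_{i_m}$; $\rho(\mathcal{A})$ spectral radius. Stabilizing index $s(\mathcal{A})$: number of invertible diagonal $D$ with $d_{11}=1$ and $\mathcal{A}=D^{-(m-1)}\mathcal{A}D$, $(D^{-(m-1)}\mathcal{A}D)_{i_1\cdots i_m}=d_{i_1}^{-(m-1)}a_{i_1\cdots i_m}d_{i_2}\cdots d_{i_m}$. Stabilizing dimension $\gamma(\mathcal{A})$: composition length of the $\mathbb{Z}_m$-module of eigenvectors $y$ for $\rho(\mathcal{A})$ normalized by $y_1=1$, with operation $y\circ\hat y=D_yD_{\hat y}v_p$, $D_y=\mathrm{diag}(y_i/|y_i|)$, $v_p$ the positive one. $s(G)=s(\mathcal{A}(G))$, $\gamma(G)=\gamma(\mathcal{A}(G))$. $\mathrm{cl}(m)$: number of prime factors of $m$ with multiplicity. *)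

(* Defs.v *)
From HB Require Import structures.
From mathcomp Require Import all_boot all_order all_algebra.
From mathcomp Require Import reals.
From mathcomp.real_closed Require Import complex.
Set Implicit Arguments. Unset Strict Implicit. Unset Printing Implicit Defensive.
Import Order.TTheory GRing.Theory Num.Theory.
Local Open Scope ring_scope.

(* ---------- Hypergraphs on the vertex set 'I_n (v_1 is the vertex 0) ---------- *)

Definition uniform (n m : nat) (E : {set {set 'I_n}}) : bool :=
  [forall e in E, #|e| == m].

Definition hadj (n : nat) (E : {set {set 'I_n}}) : rel 'I_n :=
  fun u v => [exists e in E, (u \in e) && (v \in e)].

Definition hconnected (n : nat) (E : {set {set 'I_n}}) : bool :=
  [forall u, forall v, connect (hadj E) u v].

Definition is_matching (n : nat) (E M : {set {set 'I_n}}) : bool :=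
  (M \subset E) &&
  [forall e1 in M, forall e2 in M, (e1 != e2) ==> [disjoint e1 & e2]].

Definition matching_number (n : nat) (E : {set {set 'I_n}}) : nat :=
  \max_(M : {set {set 'I_n}} | is_matching E M) #|M|.

Definition cl (m : nat) : nat := \sum_(p <- primes m) logn p m.

Definition tensor (K : Type) (m n : nat) := {ffun 'I_m -> 'I_n} -> K.

Definition head_is (m n : nat) (f : {ffun 'I_m -> 'I_n}) (i : 'I_n) : bool :=
  [forall j : 'I_m, (val j == 0%N) ==> (f j == i)].

(* (A x^{m-1})_i = sum_{i_2..i_m} a_{i i_2 .. i_m} x_{i_2} ... x_{i_m} *)
Definition tapply (K : comNzRingType) (m n : nat) (A : tensor K m n)
    (x : {ffun 'I_n -> K}) (i : 'I_n) : K :=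
  \sum_(f : {ffun 'I_m -> 'I_n} | head_is f i)
     A f * \prod_(j : 'I_m | val j != 0%N) x (f j).

Definition adj_tensor (K : fieldType) (n m : nat) (E : {set {set 'I_n}})
    : tensor K m n :=
  fun f => if [set f j | j : 'I_m] \in E then ((m.-1)`!%:R)^-1 else 0.

Section Complex.
Variable R : realType.
Local Notation C := R[i].

Definition is_eigenpair (m n : nat) (A : tensor C m n) (lam : C)
    (x : {ffun 'I_n -> C}) : Prop :=
  x != 0 /\ forall i, tapply A x i = lam * x i ^+ m.-1.

Definition is_eigenvalue (m n : nat) (A : tensor C m n) (lam : C) : Prop :=
  exists x, is_eigenpair A lam x.

Definition spectral_radius (m n : nat) (A : tensor C m n) : R :=
  sup (fun r : R => exists lam, is_eigenvalue A lam /\ `|lam| = Complex r 0).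

(* D = diag(d) is invertible, d_11 = 1, and A = D^{-(m-1)} A D, i.e.
   a_{i_1..i_m} = d_{i_1}^{-(m-1)} a_{i_1..i_m} d_{i_2} ... d_{i_m} *)
Definition stabilizing_diag (m n : nat) (A : tensor C m n)
    (d : {ffun 'I_n -> C}) : Prop :=
  (forall i, d i != 0) /\ (forall i : 'I_n, val i = 0%N -> d i = 1) /\
  forall (i : 'I_n) (f : {ffun 'I_m -> 'I_n}), head_is f i ->
    A f = (d i)^-1 ^+ m.-1 * A f * \prod_(j : 'I_m | val j != 0%N) d (f j).

(* "s(A) <= k": the set of stabilizing diagonal matrices (identified with their
   diagonals) is finite, enumerated without repetition by S, and |S| <= k *)
Definition stab_index_le (m n : nat) (A : tensor C m n) (k : rat) : Prop :=
  exists S : seq {ffun 'I_n -> C},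
    [/\ uniq S, (forall d, d \in S <-> stabilizing_diag A d) & (size S)%:R <= k].

Definition rho_eigvec_normalized (m n : nat) (A : tensor C m n)
    (y : {ffun 'I_n -> C}) : Prop :=
  is_eigenpair A (Complex (spectral_radius A) 0) y /\
  forall i : 'I_n, val i = 0%N -> y i = 1.

Definition is_perron_normalized (m n : nat) (A : tensor C m n)
    (vp : {ffun 'I_n -> C}) : Prop :=
  rho_eigvec_normalized A vp /\ forall i, 0 < vp i.

(* module operation y o y^ = D_y D_y^ v_p, D_y = diag(y_i/|y_i|) *)
Definition mod_op (n : nat) (vp y yh : {ffun 'I_n -> C}) : {ffun 'I_n -> C} :=
  [ffun i => (y i / `|y i|) * (yh i / `|yh i|) * vp i].

(* Z_m-submodules of the module of normalized rho-eigenvectors: subsets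
   containing the neutral element v_p and closed under o (closure under the
   Z_m-action k.y = y o ... o y, hence under inverses y^{-1} = (m-1).y,
   follows) *)
Definition is_submodule (m n : nat) (A : tensor C m n) (vp : {ffun 'I_n -> C})
    (M : {ffun 'I_n -> C} -> Prop) : Prop :=
  [/\ forall y, M y -> rho_eigvec_normalized A y,
      M vp &
      forall y yh, M y -> M yh -> M (mod_op vp y yh)].

(* "gamma(A) <= k": every strictly increasing chain of submodules
   M_0 < M_1 < ... < M_t has length t <= k (composition length <= k) *)
Definition stab_dim_le (m n : nat) (A : tensor C m n) (k : int) : Prop :=
  forall vp, is_perron_normalized A vp ->
  forall (c : nat -> {ffun 'I_n -> C} -> Prop) (t : nat),
    (forall s, (s <= t)%N -> is_submodule A vp (c s)) ->
    (forall s, (s < t)%N ->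
       (forall y, c s y -> c s.+1 y) /\ exists y, c s.+1 y /\ ~ c s y) ->
    (t%:Z <= k)%R.

End Complex.

(* Main.v *)
Require Import Defs.
From HB Require Import structures.
From mathcomp Require Import all_boot all_order all_algebra all_fingroup all_solvable all_field.
From mathcomp Require Import reals.
From mathcomp.real_closed Require Import complex.
From mathcomp Require Import ring.
From mathcomp Require Import zify.
From Stdlib Require Import ClassicalEpsilon.
Set Implicit Arguments. Unset Strict Implicit. Unset Printing Implicit Defensive.
Import Order.TTheory GRing.Theory Num.Theory.

Lemma clE N x : (0 < x)%N -> (x < N)%N -> cl x = \sum_(p < N) logn p x.
Proof.
move=> x0 xN.
rewrite -(big_mkord xpredT (fun p => logn p x)) /index_iota subn0.
rewrite -(@big_rmcond _ _ _ _ _ (fun p => p \in primes x)); last first.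
  by move=> p; rewrite -logn_gt0 lt0n negbK => /eqP.
rewrite -big_filter /cl; apply: perm_big.
apply: uniq_perm; first exact: primes_uniq.
  by rewrite filter_uniq // iota_uniq.
move=> p; rewrite mem_filter mem_iota add0n /=.
case Hp: (p \in primes x) => //=; symmetry.
move: Hp; rewrite mem_primes => /and3P [_ _ /dvdn_leq] => /(_ x0) px.
exact: leq_ltn_trans px xN.
Qed.

Lemma cl_mul a b : (0 < a)%N -> (0 < b)%N -> cl (a * b) = (cl a + cl b)%N.
Proof.
move=> a0 b0.
have ab0 : (0 < a * b)%N by rewrite muln_gt0 a0.
rewrite !(@clE (a * b).+1) //; last first.
- by rewrite ltnS ?leq_pmull ?leq_pmulr.
- by rewrite ltnS ?leq_pmull ?leq_pmulr.
by rewrite -big_split /=; apply: eq_bigr => p _; rewrite lognM.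
Qed.

Lemma cl_gt0 a : (1 < a)%N -> (0 < cl a)%N.
Proof.
move=> a1; have a0 : (0 < a)%N by apply: ltnW.
rewrite (@clE a.+1) //.
have Hp : (pdiv a < a.+1)%N by rewrite ltnS dvdn_leq // pdiv_dvd.
rewrite (bigD1 (Ordinal Hp)) //= addn_gt0 logn_gt0 mem_primes pdiv_prime //.
by rewrite a0 pdiv_dvd.
Qed.

Lemma cl1 : cl 1 = 0%N.
Proof. by rewrite /cl (_ : primes 1 = [::]) // big_nil. Qed.

Lemma cl_dvd a b : (a %| b)%N -> (0 < b)%N -> (cl a <= cl b)%N.
Proof.
move=> /dvdnP [k ->]; rewrite muln_gt0 => /andP [k0 a0].
by rewrite cl_mul // leq_addl.
Qed.

Lemma cl_dvd_lt a b : (a %| b)%N -> (0 < a)%N -> (a < b)%N -> (cl a < cl b)%N.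
Proof.
move=> /dvdnP [k ->] a0 Hlt.
have k1 : (1 < k)%N.
  case: k Hlt => [|[|k]] //; by rewrite ?mul0n ?mul1n ?ltnn.
by rewrite cl_mul ?(ltnW k1) // -addn1 addnC leq_add2r cl_gt0.
Qed.

Lemma cl_exp a k : (0 < a)%N -> cl (a ^ k) = (k * cl a)%N.
Proof.
move=> a0; elim: k => [|k IH]; first by rewrite expn0 cl1.
by rewrite expnS cl_mul ?expn_gt0 ?a0 // IH mulSn.
Qed.

Local Open Scope ring_scope.

Section Graph.
Variables (n m : nat) (E : {set {set 'I_n}}).
Hypothesis Hunif : uniform m E.
Hypothesis Hconn : hconnected E.

Lemma edge_card e : e \in E -> #|e| = m.
Proof. by move=> He; move/forallP: Hunif => /(_ e); rewrite He => /eqP. Qed.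

Lemma conn_ind (P : pred 'I_n) :
  (forall u v, hadj E u v -> P u -> P v) -> forall u v, P u -> P v.
Proof.
move=> HP u v Pu.
move/forallP: Hconn => /(_ u) /forallP /(_ v) /connectP [p pth ->].
elim: p u pth Pu => //= a p IH u /andP[h pth] Pu.
exact: IH pth (HP _ _ h Pu).
Qed.

Lemma pair_lemma : (0 < m)%N -> (1 < #|E|)%N ->
  exists e1 e2, [/\ e1 \in E, e2 \in E, e1 != e2 & ~~ [disjoint e1 & e2]].
Proof.
move=> m0 /card_gt1P [e1 [e2 [H1 H2 H12]]].
case: (boolP [exists e1 in E, exists e2 in E, (e1 != e2) && ~~ [disjoint e1 & e2]]).
  move=> /exists_inP [x Hx /exists_inP [y Hy /andP [Hxy Hd]]].
  by exists x, y.
move=> Hno.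
have Hdis : forall x y, x \in E -> y \in E -> x != y -> [disjoint x & y].
  move=> x y Hx Hy Hxy; apply/negPn/negP => Hd; move/negP: Hno; apply.
  by apply/exists_inP; exists x => //; apply/exists_inP; exists y => //; rewrite Hxy.
have [a Ha] : exists a, a \in e1 by apply/card_gt0P; rewrite edge_card.
have [b Hb] : exists b, b \in e2 by apply/card_gt0P; rewrite edge_card.
have Hb1 : b \in e1.
  apply: (@conn_ind (mem e1) _ a b Ha) => u v /exists_inP [e He /andP [ue ve]] ue1.
  case: (eqVneq e e1) => [<- // | Hne].
  have ue1' : u \in e1 := ue1.
  by have := disjointFr (Hdis _ _ He H1 Hne) ue; rewrite ue1'.
by have := disjointFr (Hdis _ _ H1 H2 H12) Hb1; rewrite Hb.
Qed.

Lemma fun_of_edge e i : (0 < m)%N -> e \in E -> i \in e ->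
  exists f : {ffun 'I_m -> 'I_n},
    (forall j : 'I_m, val j = 0%N -> f j = i) /\ [set f j | j : 'I_m] = e.
Proof.
move=> m0 He Hi.
pose s := i :: enum (e :\ i).
have Hs : size s = m.
  by have := edge_card He; rewrite (cardsD1 i) Hi add1n => <-; rewrite /= -cardE.
have Hsub : forall x, (x \in s) = (x \in e).
  move=> x; rewrite inE mem_enum in_setD1.
  by case: (eqVneq x i) => [-> | _] //=; rewrite Hi.
exists [ffun j : 'I_m => nth i s j]; split.
  by move=> j j0; rewrite ffunE j0.
apply/setP => x; apply/imsetP/idP.
  move=> [j _ ->]; by rewrite ffunE -Hsub mem_nth // Hs ltn_ord.
move=> xe.
have Hix : (index x s < m)%N by rewrite -Hs index_mem Hsub.
by exists (Ordinal Hix) => //; rewrite ffunE /= nth_index // Hsub.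
Qed.

Lemma inj_of_edge (f : {ffun 'I_m -> 'I_n}) :
  [set f j | j : 'I_m] \in E -> injective f.
Proof.
move=> He x y Hxy.
have : #|[set f j | j in 'I_m]| == #|'I_m|.
  by rewrite edge_card // card_ord.
by move/imset_injP => /(_ x y); apply => //.
Qed.

End Graph.

Lemma stab_eq_iff (F : fieldType) (a x P : F) k : a != 0 -> x != 0 ->
  (a = x^-1 ^+ k * a * P) <-> (P = x ^+ k).
Proof.
move=> a0 x0.
have hx : x^-1 ^+ k * x ^+ k = 1 by rewrite -exprMn mulVf ?expr1n.
have e : x^-1 ^+ k * a * P = a * (P * x^-1 ^+ k) by ring.
rewrite e; split => [h | ->].
  have h1 : P * x^-1 ^+ k = 1 by apply: (mulfI a0); rewrite -h mulr1.
  by rewrite -[P]mulr1 -hx mulrA h1 mul1r.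
by rewrite (mulrC (x ^+ k)) hx mulr1.
Qed.

Section Stab.
Variable R : realType.
Local Notation C := R[i].
Variables (n M : nat) (E : {set {set 'I_n}}) (v0 : 'I_n).
Local Notation m := M.+2.
Hypothesis Hunif : uniform m E.
Hypothesis Hconn : hconnected E.
Hypothesis Hv0 : val v0 = 0%N.

Local Notation A := (@adj_tensor C n m E).
Definition aval : C := ((m.-1)`!%:R)^-1.

Lemma aval_gt0 : 0 < aval.
Proof. by rewrite invr_gt0 ltr0n fact_gt0. Qed.

Lemma aval_neq0 : aval != 0.
Proof. by rewrite gt_eqF // aval_gt0. Qed.

Lemma head_isE (f : {ffun 'I_m -> 'I_n}) i : head_is f i = (f ord0 == i).
Proof.
apply/forallP/eqP => [/(_ ord0) /implyP H | h j]; first by apply/eqP/H.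
by apply/implyP => /eqP j0; rewrite (_ : j = ord0) ?h //; apply: val_inj.
Qed.

Lemma prod_edge (d : 'I_n -> C) (f : {ffun 'I_m -> 'I_n}) :
  [set f j | j : 'I_m] \in E ->
  \prod_(j : 'I_m | val j != 0%N) d (f j) * d (f ord0) =
  \prod_(x in [set f j | j : 'I_m]) d x.
Proof.
move=> He; rewrite big_imset /=; last by move=> x y _ _; apply: (inj_of_edge Hunif He).
rewrite [RHS](bigD1 ord0) //= mulrC; congr (_ * _).
Qed.

Lemma stab_iff (d : {ffun 'I_n -> C}) :
  stabilizing_diag A d <->
  [/\ forall i, d i != 0, d v0 = 1 &
      forall e i, e \in E -> i \in e -> d i ^+ m = \prod_(x in e) d x].
Proof.
split.
  move=> [dn0 [d1 dA]]; split => //; first exact: d1.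
  move=> e i He Hi.
  have [f [fh fe]] := fun_of_edge Hunif (ltn0Sn _) He Hi.
  have hf : head_is f i by rewrite head_isE fh.
  have := dA i f hf; rewrite /adj_tensor fe He -/aval.
  move/(stab_eq_iff _ _ aval_neq0 (dn0 i)) => h.
  rewrite -fe -prod_edge ?fe //.
  by rewrite h (fh ord0 erefl) -exprSr.
move=> [dn0 d1 dE]; split => //; split.
  by move=> i i0; rewrite (_ : i = v0) //; apply: val_inj; rewrite /= i0.
move=> i f; rewrite head_isE => /eqP fh.
rewrite /adj_tensor; case: ifP => He; last by rewrite mulr0 mul0r.
rewrite -/aval; apply/(stab_eq_iff _ _ aval_neq0 (dn0 i)).
have := prod_edge d He; rewrite -(dE _ i He); last by rewrite -fh imset_f.
rewrite fh exprSr => /(mulIf (dn0 i)) //.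
Qed.

Lemma stab_pow1 (d : {ffun 'I_n -> C}) :
  stabilizing_diag A d -> forall i, d i ^+ m = 1.
Proof.
move/stab_iff => [dn0 d1 dE] i.
apply/eqP; apply: (@conn_ind n E Hconn (fun i => d i ^+ m == 1) _ v0 i).
  move=> u v /exists_inP [e He /andP [ue ve]].
  by rewrite (dE _ _ He ue) (dE _ _ He ve).
by rewrite d1 expr1n.
Qed.

Lemma stab_prod1 (d : {ffun 'I_n -> C}) :
  stabilizing_diag A d -> forall e, e \in E -> (e != set0) ->
  \prod_(x in e) d x = 1.
Proof.
move=> hs e He /set0Pn [i Hi].
have /stab_iff [_ _ dE] := hs.
by rewrite -(dE _ _ He Hi) stab_pow1.
Qed.

End Stab.

Section Codes.
Variable R : realType.
Local Notation C := R[i].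
Variables (n M : nat) (E : {set {set 'I_n}}) (v0 : 'I_n).
Local Notation m := M.+2.
Hypothesis Hunif : uniform m E.
Hypothesis Hconn : hconnected E.
Hypothesis Hv0 : val v0 = 0%N.
Variable w : C.
Hypothesis Hw : m.-primitive_root w.

Local Notation A := (@adj_tensor C n m E).

Definition phi (a : 'Z_m) : C := w ^+ a.

Lemma phiD a b : phi (a + b) = phi a * phi b.
Proof. by rewrite /phi -exprD -[in RHS](prim_expr_mod Hw). Qed.

Lemma phi0 : phi 0 = 1.
Proof. by rewrite /phi expr0. Qed.

Lemma phi_inj a b : phi a = phi b -> a = b.
Proof.
move/eqP; rewrite /phi (eq_prim_root_expr Hw) !modn_small ?ltn_ord //.
by move/eqP => h; apply: val_inj.
Qed.

Lemma phi_eq1 a : (phi a == 1) = (a == 0).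
Proof.
apply/eqP/eqP => [h | ->]; last exact: phi0.
by apply: phi_inj; rewrite h phi0.
Qed.

Lemma phi_sum (P : pred 'I_n) (c : 'I_n -> 'Z_m) :
  phi (\sum_(x | P x) c x) = \prod_(x | P x) phi (c x).
Proof. exact: (big_morph phi phiD phi0). Qed.

Lemma phi_m a : phi a ^+ m = 1.
Proof. by rewrite /phi exprAC (prim_expr_order Hw) expr1n. Qed.

Lemma phi_neq0 a : phi a != 0.
Proof.
apply/negP => /eqP h; have := phi_m a; rewrite h expr0n /= => /eqP.
by rewrite eq_sym oner_eq0.
Qed.

Lemma norm_phi a : `|phi a| = 1.
Proof.
apply/eqP; rewrite -(@pexpr_eq1 _ _ m) // -normrX phi_m normr1 //.
Qed.

Definition dec' (c : 'rV['Z_m]_n) : {ffun 'I_n -> C} := [ffun i => phi (c 0 i)].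

Definition Qset : {set 'rV['Z_m]_n} :=
  [set c : 'rV['Z_m]_n | (c 0 v0 == 0) && [forall e in E, \sum_(x in e) c 0 x == 0]].

Lemma Q_group : group_set Qset.
Proof.
apply/group_setP; split.
  rewrite inE; apply/andP; split; first by rewrite mxE.
  apply/forall_inP => e _; apply/eqP; rewrite big1 // => x _; by rewrite mxE.
move=> x y; rewrite !inE => /andP [x0 /forall_inP xE] /andP [y0 /forall_inP yE].
apply/andP; split.
  by rewrite (_ : (x * y)%g = x + y) // mxE (eqP x0) (eqP y0) addr0.
apply/forall_inP => e He.
rewrite (_ : (x * y)%g = x + y) //.
rewrite (eq_bigr (fun i => x 0 i + y 0 i)); last by move=> i _; rewrite mxE.
by rewrite big_split /= (eqP (xE e He)) (eqP (yE e He)) addr0.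
Qed.

Definition Qg : {group 'rV['Z_m]_n} := Group Q_group.

Lemma edge_nonempty e : e \in E -> e != set0.
Proof.
move=> He; apply/set0Pn/card_gt0P; by rewrite (edge_card Hunif He).
Qed.

Lemma stab_dec c : stabilizing_diag A (dec' c) <-> c \in Qset.
Proof.
split.
  move=> hs; have /(stab_iff Hunif Hv0) [_ d1 _] := hs.
  rewrite inE; apply/andP; split.
    by move: d1; rewrite ffunE => /eqP; rewrite phi_eq1.
  apply/forall_inP => e He.
  have := stab_prod1 Hunif Hconn Hv0 hs He (edge_nonempty He).
  move=> h; rewrite -phi_eq1 phi_sum -[X in _ == X]h; apply/eqP; apply: eq_bigr => x _.
  by rewrite ffunE.
rewrite inE => /andP [c0 /forall_inP cE].
apply/(stab_iff Hunif Hv0); split.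
- by move=> i; rewrite ffunE phi_neq0.
- by rewrite ffunE (eqP c0) phi0.
move=> e i He Hi; rewrite ffunE phi_m.
rewrite (eq_bigr (fun x => phi (c 0 x))); last by move=> x _; rewrite ffunE.
by rewrite -phi_sum (eqP (cE e He)) phi0.
Qed.

Lemma stab_code (d : {ffun 'I_n -> C}) :
  stabilizing_diag A d -> exists c, d = dec' c.
Proof.
move=> hs.
have hp := stab_pow1 Hunif Hconn Hv0 hs.
exists (\row_i (sval (prim_rootP Hw (hp i)) : 'Z_m)).
apply/ffunP => i; rewrite !ffunE mxE /phi.
by case: (prim_rootP Hw (hp i)).
Qed.

Lemma dec'_inj : injective dec'.
Proof.
move=> c c' h; apply/rowP => i.
have := congr1 (fun f : {ffun 'I_n -> C} => f i) h; rewrite /= !ffunE; exact: phi_inj.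
Qed.

End Codes.

Section Comb.
Variables (n M : nat) (E : {set {set 'I_n}}) (v0 : 'I_n).
Local Notation m := M.+2.
Hypothesis Hunif : uniform m E.
Variables (M0 : {set {set 'I_n}}) (f : {set 'I_n}).
Hypothesis HM0 : is_matching E M0.
Hypothesis Hf : f \in E.
Hypothesis HfM : f \notin M0.

Local Notation Q := (@Qset n M E v0).

Lemma M0E e : e \in M0 -> e \in E.
Proof. by move: HM0 => /andP [/subsetP h _] /h. Qed.

Lemma mdisj e1 e2 x : e1 \in M0 -> e2 \in M0 -> x \in e1 -> x \in e2 -> e1 = e2.
Proof.
move=> H1 H2 x1 x2; apply/eqP; apply/negPn/negP => ne.
move: HM0 => /andP [_ /forall_inP /(_ e1 H1) /forall_inP /(_ e2 H2) /implyP /(_ ne) d].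
by have := disjointFr d x1; rewrite x2.
Qed.

Lemma diff_ne e e' : e \in E -> e' \in E -> e != e' -> exists2 x, x \in e & x \notin e'.
Proof.
move=> He He' ne.
case: (boolP (e \subset e')) => [sub | ].
  move/negP: ne => ne; exfalso; apply: ne; rewrite eqEcard sub /=.
  by rewrite (edge_card Hunif He) (edge_card Hunif He').
by case/subsetPn => x xe xe'; exists x.
Qed.

Lemma EL c e x : c \in Q -> e \in E -> x \in e ->
  (forall y, y \in e -> y != x -> c 0 y = 0) -> c 0 x = 0.
Proof.
rewrite inE => /andP [_ /forall_inP cE] He xe hy.
have := eqP (cE e He); rewrite (bigD1 x) //= big1 ?addr0 //.
by move=> y /andP [ye yx]; apply: hy.
Qed.

Lemma assemble (u : 'I_n) (v : {set 'I_n} -> 'I_n) :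
  (forall e, e \in M0 -> v e \in e) ->
  (forall e, e \in M0 -> (v e != v0) && (v e != u)) ->
  u != v0 ->
  let D := v0 |: (u |: [set v e | e in M0]) in
  #|D| = (#|M0|).+2 /\
  forall c, c \in Q -> (forall i, i \notin D -> c 0 i = 0) -> c 0 u = 0 -> c = 0.
Proof.
move=> h1 h2 h3 D.
have vinj : {in M0 &, injective v}.
  by move=> e e' He He' ee; apply: (mdisj He He' (h1 _ He)); rewrite ee h1.
split.
  rewrite /D cardsU1 cardsU1 card_in_imset // !inE negb_or.
  have -> : v0 != u by rewrite eq_sym.
  have -> : v0 \notin [set v e | e in M0].
    by apply/imsetP => [[e He ev]]; move: (h2 e He); rewrite -ev eqxx.
  have -> : u \notin [set v e | e in M0].
    by apply/imsetP => [[e He ev]]; move: (h2 e He); rewrite -ev eqxx andbF.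
  by [].
move=> c cQ cD cu.
have c0 : c 0 v0 = 0 by move: cQ; rewrite inE => /andP [/eqP].
have cv : forall e, e \in M0 -> c 0 (v e) = 0.
  move=> e He; apply: (EL cQ (M0E He) (h1 _ He)) => y ye yv.
  case: (boolP (y \in D)); last by apply: cD.
  rewrite !inE => /orP [/eqP -> // | /orP [/eqP -> // | /imsetP [e' He' ye']]].
  by subst y; move: yv; rewrite (mdisj He' He (h1 _ He') ye) eqxx.
apply/rowP => i; rewrite mxE.
case: (boolP (i \in D)); last by apply: cD.
rewrite !inE => /orP [/eqP -> // | /orP [/eqP -> // | /imsetP [e' He' ->]]].
exact: cv.
Qed.

Lemma keyD : exists D : {set 'I_n}, #|D| = (#|M0|).+2 /\
  forall c, c \in Q -> (forall i, i \notin D -> c 0 i = 0) -> c = 0.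
Proof.
have fneM : forall e, e \in M0 -> e != f.
  by move=> e He; apply/eqP => ef; move: HfM; rewrite -ef He.
case: (boolP [exists e1 in M0, e1 :\: f == [set v0]]).
-
  move=> /exists_inP [e1 He1 /eqP e1f].
  have v0e1 : v0 \in e1 by have := set11 v0; rewrite -e1f inE => /andP [].
  have v0f : v0 \notin f by have := set11 v0; rewrite -e1f inE => /andP [].
  have [u uf ue1] := diff_ne Hf (M0E He1) (negbT (introF eqP (fun h => (negP (fneM _ He1)) (introT eqP (esym h))))).
  pose v e := if e == e1 then odflt v0 [pick x in e :\ v0]
              else odflt v0 [pick x in e :\: f].
  have hv1 : v e1 \in e1 /\ v e1 != v0.
    rewrite /v eqxx; case: pickP => [x | h] /=; first by rewrite !inE => /andP [-> ->].
    exfalso; have : (0 < #|e1 :\ v0|)%N.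
      by have := edge_card Hunif (M0E He1); rewrite (cardsD1 v0) v0e1 add1n => [[->]].
    by move/card_gt0P => [x]; rewrite h.
  have hv2 : forall e, e \in M0 -> e != e1 -> v e \in e /\ v e \notin f.
    move=> e He ne; rewrite /v (negbTE ne); case: pickP => [x | h] /=.
      by rewrite !inE => /andP [-> ->].
    exfalso; have [x xe xf] := diff_ne (M0E He) Hf (fneM _ He).
    by move: (h x); rewrite !inE xe xf.
  have h1 : forall e, e \in M0 -> v e \in e.
    move=> e He; case: (eqVneq e e1) => [-> | ne]; first by case: hv1.
    by case: (hv2 e He ne).
  have h2 : forall e, e \in M0 -> (v e != v0) && (v e != u).
    move=> e He; case: (eqVneq e e1) => [-> | ne].
      case: hv1 => ve ->; by apply/eqP => vu; move: ue1; rewrite -vu ve.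
    case: (hv2 e He ne) => ve vf; apply/andP; split.
      by apply/eqP => vv; move: ne; rewrite (mdisj He He1 ve (_ : v e \in e1)) ?eqxx // vv ?v0e1.
    by apply/eqP => vu; move: vf; rewrite vu uf.
  have h3 : u != v0 by apply/eqP => uv; move: ue1; rewrite uv v0e1.
  have [hcard hz] := assemble h1 h2 h3.
  exists (v0 |: (u |: [set v e | e in M0])); split => // c cQ cD.
  apply: hz => //.
  have c0 : c 0 v0 = 0 by move: cQ; rewrite inE => /andP [/eqP].
  have ce1 : c 0 (v e1) = 0.
    apply: (EL cQ (M0E He1) (h1 _ He1)) => y ye yv.
    case: (boolP (y \in v0 |: (u |: [set v e | e in M0]))); last by apply: cD.
    rewrite !inE => /orP [/eqP -> // | /orP [/eqP yu | /imsetP [e' He' ye']]].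
      by move: ue1; rewrite -yu ye.
    by subst y; move: yv; rewrite (mdisj He1 He' ye (h1 _ He')) eqxx.
  apply: (EL cQ Hf uf) => y yf yu.
  case: (boolP (y \in v0 |: (u |: [set v e | e in M0]))); last by apply: cD.
  rewrite !inE => /orP [/eqP -> // | /orP [/eqP yu' | /imsetP [e' He' ye']]].
    by move: yu; rewrite yu' eqxx.
  case: (eqVneq e' e1) => [ee | ne]; first by rewrite ye' ee.
  by case: (hv2 e' He' ne) => _; rewrite -ye' yf.
-
  move=> hno.
  have [u uf uv0] : exists2 u, u \in f & u != v0.
    have : (1 < #|f|)%N by rewrite (edge_card Hunif Hf).
    move/card_gt1P => [x [y [xf yf xy]]].
    case: (eqVneq x v0) => [xv | xv]; last by exists x.
    by exists y => //; rewrite -xv eq_sym.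
  pose v e := odflt v0 [pick x in (e :\: f) :\ v0].
  have hv : forall e, e \in M0 -> [/\ v e \in e, v e \notin f & v e != v0].
    move=> e He; rewrite /v; case: pickP => [x | h] /=.
      by rewrite !inE => /and3P [-> -> ->].
    exfalso; move/negP: hno; apply; apply/exists_inP; exists e => //.
    rewrite eqEcard; apply/andP; split.
      apply/subsetP => x xe; rewrite inE; apply/negPn/negP => xv.
      by move: (h x); rewrite in_setD1 xv xe.
    rewrite cards1; apply/card_gt0P.
    have [x xe xf] := diff_ne (M0E He) Hf (fneM _ He).
    by exists x; rewrite inE xe xf.
  have h1 : forall e, e \in M0 -> v e \in e by move=> e /hv [].
  have h2 : forall e, e \in M0 -> (v e != v0) && (v e != u).
    move=> e /hv [_ vf ->] /=; by apply/eqP => vu; move: vf; rewrite vu uf.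
  have [hcard hz] := assemble h1 h2 uv0.
  exists (v0 |: (u |: [set v e | e in M0])); split => // c cQ cD.
  apply: hz => //.
  have c0 : c 0 v0 = 0 by move: cQ; rewrite inE => /andP [/eqP].
  apply: (EL cQ Hf uf) => y yf yu.
  case: (boolP (y \in v0 |: (u |: [set v e | e in M0]))); last by apply: cD.
  rewrite !inE => /orP [/eqP -> // | /orP [/eqP yu' | /imsetP [e' He' ye']]].
    by move: yu; rewrite yu' eqxx.
  by case: (hv e' He') => _; rewrite -ye' yf.
Qed.

End Comb.

Lemma prod_const_M (R : numDomainType) M (c : R) :
  \prod_(j < M.+2 | val j != 0%N) c = c ^+ M.+1.
Proof.
rewrite big_mkcond big_ord_recl /= mul1r.
rewrite (eq_bigr (fun _ => c)); last by move=> i _.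
by rewrite -(big_mkord xpredT (fun _ => c)) prodr_const_nat subn0.
Qed.

Lemma prod_eq_le (R : numDomainType) (I : finType) (P : pred I) (a b : I -> R) :
  (forall j, P j -> 0 <= a j <= b j) -> (forall j, P j -> 0 < b j) ->
  \prod_(j | P j) a j = \prod_(j | P j) b j -> forall j, P j -> a j = b j.
Proof.
move=> hab hb heq j Pj.
apply/eqP; apply/negPn/negP => ne.
have /andP [a0 ab] := hab j Pj.
have lt : a j < b j by rewrite lt_def eq_sym ne ab.
move: heq; rewrite (bigD1 j Pj) [X in _ = X](bigD1 j Pj) /=.
set pa := \prod_(i | P i && (i != j)) a i.
set pb := \prod_(i | P i && (i != j)) b i.
have pab : pa <= pb by apply: ler_prod => i /andP [Pi _]; apply: hab.
have pa0 : 0 <= pa by apply: prodr_ge0 => i /andP [Pi _]; case/andP: (hab i Pi).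
have pb0 : 0 < pb by apply: prodr_gt0 => i /andP [Pi _]; apply: hb.
have : a j * pa < b j * pb.
  apply: le_lt_trans (_ : a j * pb < _); first exact: ler_wpM2l.
  by rewrite ltr_pM2r.
by move=> lt2 heq2; move: lt2; rewrite heq2 ltxx.
Qed.

Lemma exmax (I : eqType) (R : realDomainType) (G : I -> R) (x : I) (s : seq I) :
  exists2 i0, i0 \in x :: s & forall i, i \in x :: s -> G i <= G i0.
Proof.
elim: s x => [|a s IH] x.
  by exists x; rewrite ?inE // => i; rewrite inE => /eqP ->.
have [i0 Hi0 Hm] := IH a.
case: (leP (G x) (G i0)) => h.
  exists i0; first by rewrite inE Hi0 orbT.
  by move=> i; rewrite inE => /orP [/eqP -> // | /Hm].
exists x; first by rewrite inE eqxx.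
move=> i; rewrite inE => /orP [/eqP -> // | /Hm hi].
exact: le_trans hi (ltW h).
Qed.

Section Perron.
Variable R : realType.
Local Notation C := R[i].
Variables (n M : nat) (E : {set {set 'I_n}}) (v0 : 'I_n).
Local Notation m := M.+2.
Hypothesis Hunif : uniform m E.
Hypothesis Hconn : hconnected E.
Hypothesis Hv0 : val v0 = 0%N.
Hypothesis HE : (0 < #|E|)%N.
Local Notation A := (@adj_tensor C n m E).
Variable vp : {ffun 'I_n -> C}.
Hypothesis Hvp : is_perron_normalized A vp.

Local Notation rho := (Complex (spectral_radius A) 0).

Definition Pr (x : {ffun 'I_n -> C}) (g : {ffun 'I_m -> 'I_n}) :=
  \prod_(j : 'I_m | val j != 0%N) x (g j).

Lemma tapplyE x i : tapply A x i = \sum_(g | head_is g i) A g * Pr x g.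
Proof. by []. Qed.

Lemma A_ge0 g : 0 <= A g.
Proof. rewrite /adj_tensor; case: ifP => _ //; exact: ltW (aval_gt0 _ _). Qed.

Lemma A_neq0 g : A g != 0 -> [set g j | j : 'I_m] \in E /\ A g = aval R M.
Proof. by rewrite /adj_tensor; case: ifP => // _; rewrite eqxx. Qed.

Lemma vp_gt0 i : 0 < vp i.
Proof. by case: Hvp => _ /(_ i). Qed.

Lemma vp_eig i : tapply A vp i = rho * vp i ^+ M.+1.
Proof. by case: Hvp => [[[_ /(_ i) h] _] _]. Qed.

Lemma vp_v0 : vp v0 = 1.
Proof. by case: Hvp => [[_ /(_ v0 Hv0)]]. Qed.

Lemma rho_gt0 : 0 < rho.
Proof.
have [e He] : exists e, e \in E by apply/card_gt0P.
have [i Hi] : exists i, i \in e by apply/card_gt0P; rewrite (edge_card Hunif He).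
have [f [fh fe]] := fun_of_edge Hunif (ltn0Sn _) He Hi.
have hf : head_is f i by rewrite head_isE fh.
have : 0 < tapply A vp i.
  rewrite tapplyE (bigD1 f hf) /=.
  apply: ltr_wpDr; first by apply: sumr_ge0 => g _; rewrite mulr_ge0 ?A_ge0 // prodr_ge0 // => j _; exact: ltW (vp_gt0 _).
  rewrite /adj_tensor fe He mulr_gt0 ?aval_gt0 //.
  by apply: prodr_gt0 => j _; apply: vp_gt0.
by rewrite vp_eig pmulr_lgt0 // exprn_gt0 // vp_gt0.
Qed.

Section Y.
Variable y : {ffun 'I_n -> C}.
Hypothesis Hy : rho_eigvec_normalized A y.

Let z : {ffun 'I_n -> C} := [ffun i => `|y i|].

Lemma y_eig i : tapply A y i = rho * y i ^+ M.+1.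
Proof. by case: Hy => [[_ /(_ i) h] _]. Qed.

Lemma y_v0 : y v0 = 1.
Proof. by case: Hy => _ /(_ v0 Hv0). Qed.

Lemma ineq1 i : rho * z i ^+ M.+1 <= \sum_(g | head_is g i) A g * Pr z g.
Proof.
have -> : rho * z i ^+ M.+1 = `|tapply A y i|.
  by rewrite y_eig normrM normrX gtr0_norm ?rho_gt0 // ffunE.
rewrite tapplyE; apply: le_trans (ler_norm_sum _ _ _) _.
apply: ler_sum => g _; rewrite normrM ger0_norm ?A_ge0 // normr_prod /Pr.
rewrite [X in _ <= X](_ : _ = A g * \prod_(j < m | val j != 0%N) `|y (g j)|) //.
by congr (_ * _); apply: eq_bigr => j _; rewrite ffunE.
Qed.

Lemma abs_eq_vp : forall i, `|y i| = vp i.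
Proof.
have z0 : forall i, 0 <= z i by move=> i; rewrite ffunE.
pose q i := z i / vp i.
have q0 : forall i, 0 <= q i by move=> i; rewrite divr_ge0 // ltW ?vp_gt0.
have [i0 _ Hm] := exmax (fun i => complex.Re (q i)) v0 (enum 'I_n).
have [c cdef] : {c | c = q i0} by exists (q i0).
have hq : forall i, q i <= c.
  move=> i; rewrite cdef lecE (ger0_Im (q0 i)) (ger0_Im (q0 i0)) eqxx /=.
  by apply: Hm; rewrite inE mem_enum orbT.
have hle : forall i, z i <= c * vp i.
  move=> i; rewrite -[z i](divfK (lt0r_neq0 (vp_gt0 i))).
  by apply: ler_wpM2r; [exact: ltW (vp_gt0 i) | exact: hq].
have c0 : 0 < c.
  have [j yj] : exists j, y j != 0.
    case: Hy => [[yn0 _] _]; apply/existsP; apply: contraR yn0 => /existsPn h.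
    by apply/eqP/ffunP => j; rewrite ffunE; apply/eqP; rewrite -[_ == _]negbK h.
  apply: lt_le_trans (hq j).
  by rewrite divr_gt0 ?vp_gt0 // ffunE normr_gt0.
have key : forall u, z u = c * vp u -> forall g, head_is g u ->
    [set g j | j : 'I_m] \in E -> forall j : 'I_m, val j != 0%N -> z (g j) = c * vp (g j).
  move=> u zu g hg gE.
  pose cvp : {ffun 'I_n -> C} := [ffun i => c * vp i].
  have cvpE : forall i, cvp i = c * vp i by move=> i; rewrite /cvp ffunE.
  have Pcvp : forall h, Pr cvp h = c ^+ M.+1 * Pr vp h.
    move=> h; rewrite /Pr (eq_bigr (fun j => c * vp (h j))); last by move=> j _; rewrite cvpE.
    by rewrite big_split /= prod_const_M.
  have le2 : \sum_(h | head_is h u) A h * Pr z h <= \sum_(h | head_is h u) A h * Pr cvp h.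
    apply: ler_sum => h _; apply: ler_wpM2l; first exact: A_ge0.
    by apply: ler_prod => j _; rewrite z0 cvpE hle.
  have eq2 : \sum_(h | head_is h u) A h * Pr cvp h = rho * z u ^+ M.+1.
    under eq_bigr do rewrite Pcvp mulrCA.
    have zu2 := zu; rewrite -mulr_sumr -(tapplyE vp u) vp_eig; move: zu2 => ->.
    by rewrite exprMn mulrCA.
  have eqs : \sum_(h | head_is h u) A h * Pr z h = \sum_(h | head_is h u) A h * Pr cvp h.
    by apply: le_anti; rewrite le2 eq2 ineq1.
  have hz : \sum_(h | head_is h u) (A h * Pr cvp h - A h * Pr z h) = 0.
    by rewrite sumrB eqs subrr.
  have := psumr_eq0P _ hz hg.
  move=> /(_ _) h0.
  have {h0} h0 : A g * Pr cvp g - A g * Pr z g = 0.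
    apply: h0 => h _; rewrite subr_ge0; apply: ler_wpM2l; first exact: A_ge0.
    by apply: ler_prod => j _; rewrite z0 cvpE hle.
  have Ag : A g = aval R M by rewrite /adj_tensor gE.
  move/eqP: h0; rewrite subr_eq0 Ag => /eqP /(mulfI (aval_neq0 _ _)) hP.
  have hab : forall j : 'I_m, val j != 0%N -> 0 <= z (g j) <= cvp (g j).
    by move=> j' _; rewrite z0 cvpE hle.
  have hb : forall j : 'I_m, val j != 0%N -> 0 < cvp (g j).
    by move=> j' _; rewrite cvpE mulr_gt0 ?vp_gt0.
  move=> j hj; rewrite -cvpE; exact: (prod_eq_le hab hb (esym hP) hj).
have zall : forall i, z i = c * vp i.
  move=> i; apply/eqP.
  apply: (@conn_ind n E Hconn (fun i => z i == c * vp i) _ i0 i).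
    move=> u v /exists_inP [e He /andP [ue ve]] /eqP zu.
    have [g [gh ge]] := fun_of_edge Hunif (ltn0Sn _) He ue.
    have hg : head_is g u by rewrite head_isE gh.
    move: ve; rewrite -ge => /imsetP [j _ ->].
    case: (eqVneq (val j) 0%N) => [j0 | j0]; first by rewrite gh // zu.
    by rewrite (key u zu g hg _ j j0) // ge.
  by rewrite cdef /q divfK // lt0r_neq0 // vp_gt0.
move=> i; have := zall i; rewrite ffunE.
have : z v0 = c * vp v0 := zall v0.
by rewrite ffunE y_v0 vp_v0 normr1 mulr1 => <-; rewrite mul1r.
Qed.


Definition theta : {ffun 'I_n -> C} := [ffun i => y i / `|y i|].

Lemma y_neq0 i : y i != 0.
Proof. by rewrite -normr_gt0 abs_eq_vp vp_gt0. Qed.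

Lemma theta_neq0 i : theta i != 0.
Proof. by rewrite ffunE mulf_neq0 ?invr_eq0 ?normr_eq0 ?y_neq0. Qed.

Lemma y_thetaE i : y i = theta i * vp i.
Proof. by rewrite ffunE -(abs_eq_vp i) divfK // normr_eq0 y_neq0. Qed.

Lemma y_theta : y = [ffun i => theta i * vp i].
Proof. by apply/ffunP => i; rewrite [RHS]ffunE y_thetaE. Qed.

Lemma theta_stab : stabilizing_diag A theta.
Proof.
split; first exact: theta_neq0.
split.
  move=> i i0; rewrite (_ : i = v0); last by apply: val_inj; rewrite /= i0 Hv0.
  by rewrite ffunE y_v0 normr1 divr1.
move=> i g hg.
case: (eqVneq (A g) 0) => [-> | Ag]; first by rewrite mulr0 mul0r.
have [gE Aeq] := A_neq0 Ag; rewrite Aeq.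
apply/(stab_eq_iff _ _ (aval_neq0 _ _) (theta_neq0 i)) => /=.
pose T h := A h * Pr y h.
have normT : forall h, `|T h| = A h * Pr vp h.
  move=> h; rewrite /T normrM ger0_norm ?A_ge0 // normr_prod.
  by congr (_ * _); apply: eq_bigr => j _; rewrite abs_eq_vp.
have nsum : `|\sum_(h | head_is h i) T h| = \sum_(h | head_is h i) `|T h|.
  rewrite (eq_bigr _ (fun h _ => normT h)) -(tapplyE vp i) vp_eig.
  by rewrite -(tapplyE y i) y_eig normrM normrX gtr0_norm ?rho_gt0 // abs_eq_vp.
have [t t1 tdef] := normC_sum_eq nsum.
have sumT : \sum_(h | head_is h i) T h = (\sum_(h | head_is h i) `|T h|) * t.
  by rewrite mulr_suml; apply: eq_bigr => h hh; rewrite -tdef.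
have rv0 : rho * vp i ^+ M.+1 != 0.
  by rewrite mulf_neq0 ?expf_neq0 // lt0r_neq0 ?rho_gt0 ?vp_gt0.
have tE : t = theta i ^+ M.+1.
  move: sumT; rewrite -(tapplyE y i) y_eig (eq_bigr _ (fun h _ => normT h)) -tapplyE vp_eig.
  rewrite y_thetaE exprMn mulrCA mulrC => /(mulfI rv0) <-.
  by [].
have PrE : Pr y g = Pr theta g * Pr vp g.
  by rewrite /Pr -big_split /=; apply: eq_bigr => j _; rewrite y_thetaE.
have Pv0 : aval R M * Pr vp g != 0.
  by rewrite mulf_neq0 ?aval_neq0 // lt0r_neq0 // prodr_gt0 // => j _; apply: vp_gt0.
move: (tdef g hg); rewrite normT /T PrE Aeq -tE mulrA (mulrC _ (Pr theta g)) -mulrA.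
by rewrite (mulrC (Pr theta g)) => /(mulfI Pv0).
Qed.

End Y.
End Perron.

Lemma prim_ex (R : realType) n : (n > 0)%N -> {z : R[i] | n.-primitive_root z}.
Proof.
pose p : {poly R[i]} := 'X^n - 1; have [r Dp] := closed_field_poly_normal p.
move=> n_gt0; apply/sigW; rewrite (monicP _) ?monicXnsubC // scale1r in Dp.
have rn1: all n.-unity_root r by apply/allP=> z; rewrite -root_prod_XsubC -Dp.
have sz_r: (n < (size r).+1)%N.
  by rewrite -(size_prod_XsubC r id) -Dp size_XnsubC.
have [|z] := hasP (has_prim_root n_gt0 rn1 _ sz_r); last by exists z.
by rewrite -separable_prod_XsubC -Dp separable_Xn_sub_1 // pnatr_eq0 -lt0n.
Qed.

Definition pb (P : Prop) : bool := if excluded_middle_informative P then true else false.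

Lemma pbP (P : Prop) : reflect P (pb P).
Proof. by rewrite /pb; case: excluded_middle_informative => h; constructor. Qed.

Lemma group_dvd (gT : finGroupType) (H K : {set gT}) :
  group_set H -> group_set K -> H \subset K -> (#|H| %| #|K|)%N.
Proof.
move=> gH gK sHK.
exact: (@cardSg _ (Group gK) (Group gH) sHK).
Qed.

Lemma group_card_gt0 (gT : finGroupType) (H : {set gT}) : group_set H -> (0 < #|H|)%N.
Proof. by move=> gH; apply/card_gt0P; exists 1%g; case/group_setP: gH. Qed.

Lemma group_cl_lt (gT : finGroupType) (H K : {set gT}) :
  group_set H -> group_set K -> H \proper K -> (cl #|H| < cl #|K|)%N.
Proof.
move=> gH gK /properP [sHK [x xK xH]].
apply: cl_dvd_lt; first exact: group_dvd.
  exact: group_card_gt0.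
apply: proper_card; apply/properP; split => //; by exists x.
Qed.

Lemma m_ge2 n m (E : {set {set 'I_n}}) :
  uniform m E -> hconnected E -> (1 < #|E|)%N -> (1 < m)%N.
Proof.
move=> Hunif Hconn HE.
case: m Hunif => [|[|M]] Hunif //.
  move/card_gt1P: HE => [e1 [e2 [H1 H2 H12]]].
  move: H12; rewrite (cards0_eq (edge_card Hunif H1)) (cards0_eq (edge_card Hunif H2)).
  by rewrite eqxx.
have [e1 [e2 [H1 H2 H12 Hd]]] := pair_lemma Hunif Hconn (isT : (0 < 1)%N) HE.
move: Hd; rewrite -setI_eq0 => /set0Pn [x]; rewrite inE => /andP [x1 x2].
have /cards1P [a ea] : #|e1| == 1%N by rewrite (edge_card Hunif H1).
have /cards1P [b eb] : #|e2| == 1%N by rewrite (edge_card Hunif H2).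
move: x1 x2 H12; rewrite ea eb !inE => /eqP -> /eqP ->; by rewrite eqxx.
Qed.

Theorem corollary4p14 (R : realType) (n m : nat) (E : {set {set 'I_n}}) :
  uniform m E -> hconnected E -> (1 < #|E|)%N ->
  let A := @adj_tensor R[i] n m E in
  let mu := matching_number E in
  stab_index_le A ((m%:R : rat) ^ (n%:Z - mu%:Z - 2)) /\
  stab_dim_le A ((n%:Z - mu%:Z - 2) * (cl m)%:Z).
Proof.
case: m => [|[|M]] Hunif Hconn HE; try by have := m_ge2 Hunif Hconn HE.
move=> A mu.
have HE0 : (0 < #|E|)%N by apply: ltnW.
have [e0 He0] : exists e, e \in E by apply/card_gt0P.
have [x0 _] : exists x, x \in e0 by apply/card_gt0P; rewrite (edge_card Hunif He0).
have n0 : (0 < n)%N by apply: leq_ltn_trans (ltn_ord x0).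
pose v0 : 'I_n := Ordinal n0.
have Hv0 : val v0 = 0%N by [].
have [M0 HM0 Hmu] : {M0 | M0 \in [pred M : {set {set 'I_n}} | is_matching E M] & mu = #|M0|}.
  have := @eq_bigmax_cond _ [pred M : {set {set 'I_n}} | is_matching E M] (fun M => #|M|).
  case => [| M0 HM0 h]; last by exists M0.
  apply/card_gt0P; exists set0; rewrite inE /is_matching sub0set /=.
  by apply/forall_inP => e; rewrite inE.
rewrite inE in HM0.
have [f Hf HfM] : exists2 f, f \in E & f \notin M0.
  have [e1 [e2 [H1 H2 H12 Hd]]] := pair_lemma Hunif Hconn (isT : (0 < M.+2)%N) HE.
  case: (boolP (e1 \in M0)) => h1; last by exists e1.
  case: (boolP (e2 \in M0)) => h2; last by exists e2.
  move: HM0 => /andP [_ /forall_inP /(_ e1 h1) /forall_inP /(_ e2 h2) /implyP /(_ H12)].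
  by rewrite (negbTE Hd).
have [D [HD Hz]] := keyD v0 Hunif HM0 Hf HfM.
have [w Hw] := prim_ex R (ltn0Sn M.+1).
have hmu : (mu.+2 <= n)%N by have := max_card (mem D); rewrite card_ord HD -Hmu.
set k := #|~: D|.
have hk : k = (n - mu.+2)%N.
  by have := cardsC D; rewrite card_ord HD -Hmu -/k => <-; rewrite addKn.
pose Q := Qset M E v0.
have gQ : group_set Q := Q_group M E v0.
pose G := Group gQ.
have QD : forall a b, a \in Q -> b \in Q -> a + b \in Q.
  by move=> a b aQ bQ; have := @groupM _ G a b aQ bQ.
have QN : forall a, a \in Q -> - a \in Q.
  by move=> a aQ; have := @groupVr _ G a aQ.
have Q0 : (0 : 'rV['Z_M.+2]_n) \in Q by have := @group1 _ G.
pose pi (c : 'rV['Z_M.+2]_n) : 'rV['Z_M.+2]_k := \row_(j < k) c 0 (enum_val j).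
have piD : forall a b, pi (a + b) = pi a + pi b by move=> a b; apply/rowP => j; rewrite !mxE.
have pi0 : pi 0 = 0 by apply/rowP => j; rewrite !mxE.
have pi_inj : {in Q &, injective pi}.
  move=> a b aQ bQ hab.
  have dQ : a - b \in Q by apply: QD => //; apply: QN.
  have : a - b = 0.
    apply: (Hz _ dQ) => i iD.
    have iF : i \in ~: D by rewrite inE.
    have := congr1 (fun r : 'rV_k => r 0 (enum_rank_in iF i)) hab.
    by rewrite !mxE (enum_rankK_in iF iF) => ->; rewrite subrr.
  by move/eqP; rewrite subr_eq0 => /eqP.
have gpi : group_set (pi @: Q).
  apply/group_setP; split.
    by apply/imsetP; exists 0 => //; rewrite pi0.
  move=> x y /imsetP [a aQ ->] /imsetP [b bQ ->]; apply/imsetP; exists (a + b).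
    exact: QD.
  by rewrite piD.
have cardQ : #|Q| = #|pi @: Q| by rewrite card_in_imset.
have Qdvd : (#|Q| %| M.+2 ^ k)%N.
  rewrite cardQ (_ : (M.+2 ^ k)%N = #|[set: 'rV['Z_M.+2]_k]|); last first.
    by rewrite cardsT card_mx card_ord mul1n.
  exact: (group_dvd gpi (group_setT _) (subsetT _)).
have Q0lt : (0 < #|Q|)%N by apply/card_gt0P; exists 0.
have Qle : (#|Q| <= M.+2 ^ k)%N by apply: dvdn_leq => //; rewrite expn_gt0.
have hexp : n%:Z - mu%:Z - 2 = k%:Z.
  rewrite hk; move: hmu; clear; lia.
split.
  exists (map (dec' w) (enum Q)); split.
  - by rewrite map_inj_uniq ?enum_uniq //; apply: dec'_inj Hw.
  - move=> d; split.
      move/mapP => [c cQ ->]; apply/(stab_dec Hunif Hconn Hv0 Hw).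
      by rewrite mem_enum in cQ.
    move=> hs; have [c hc] := stab_code Hunif Hconn Hv0 Hw hs.
    apply/mapP; exists c => //; rewrite mem_enum.
    by apply/(stab_dec Hunif Hconn Hv0 Hw); rewrite -hc.
  - by rewrite size_map -cardE hexp /= -exprnP -natrX ler_nat.
move=> vp Hvp c t Hsub Hch.
rewrite hexp -PoszM lez_nat.
have vp0 : forall i, 0 < vp i by case: Hvp.
pose dec (x : 'rV['Z_M.+2]_n) : {ffun 'I_n -> R[i]} := [ffun i => phi w (x 0 i) * vp i].
have decP : forall x i, dec x i / `|dec x i| = phi w (x 0 i).
  move=> x i; rewrite ffunE normrM norm_phi // mul1r gtr0_norm //.
  by rewrite mulfK // lt0r_neq0.
have dec_inj : injective dec.
  move=> a b hab; apply/rowP => i; apply: (phi_inj Hw).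
  by rewrite -!decP hab.
have dec0 : dec 0 = vp.
  by apply/ffunP => i; rewrite ffunE mxE phi0 mul1r.
have decD : forall a b, mod_op vp (dec a) (dec b) = dec (a + b).
  by move=> a b; apply/ffunP => i; rewrite /mod_op ffunE !decP [RHS]ffunE mxE phiD.
have norm_dec : forall y, rho_eigvec_normalized A y -> exists2 x, y = dec x & x \in Q.
  move=> y Hy.
  have hs := theta_stab Hunif Hconn Hv0 HE0 Hvp Hy.
  have [x hx] := stab_code Hunif Hconn Hv0 Hw hs.
  exists x.
    rewrite (y_theta Hunif Hconn Hv0 HE0 Hvp Hy) hx.
    by apply/ffunP => i; rewrite !ffunE.
  by apply/(stab_dec Hunif Hconn Hv0 Hw); rewrite -hx.
pose H s := [set x : 'rV['Z_M.+2]_n | pb (c s (dec x))].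
have inH : forall s x, (x \in H s) = pb (c s (dec x)) by move=> s x; rewrite inE.
have gH : forall s, (s <= t)%N -> group_set (H s).
  move=> s st; have [_ cvp cmod] := Hsub s st.
  apply/group_setP; split.
    by rewrite inH; apply/pbP; rewrite (_ : dec 1%g = vp).
  move=> x y; rewrite !inH => /pbP cx /pbP cy; apply/pbP.
  by rewrite (_ : (x * y)%g = x + y) // -decD; apply: cmod.
have HtQ : H t \subset Q.
  apply/subsetP => x; rewrite inH => /pbP cx.
  have [sub _ _] := Hsub t (leqnn t).
  have [x' hx' x'Q] := norm_dec _ (sub _ cx).
  by rewrite (dec_inj _ _ hx').
have Hprop : forall s, (s < t)%N -> H s \proper H s.+1.
  move=> s st; have [hsub [y [ys1 yns]]] := Hch s st.
  apply/properP; split.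
    by apply/subsetP => x; rewrite !inH => /pbP h; apply/pbP; apply: hsub.
  have [sub _ _] := Hsub s.+1 st.
  have [x hx _] := norm_dec _ (sub _ ys1).
  exists x.
    by rewrite inH; apply/pbP; rewrite -hx.
  by rewrite inH; apply/pbP; rewrite -hx.
have ind : forall s, (s <= t)%N -> (s <= cl #|H s|)%N.
  elim => [|s IH] st //.
  have := group_cl_lt (gH s (ltnW st)) (gH s.+1 st) (Hprop s st).
  by apply: leq_trans; rewrite ltnS IH // ltnW.
apply: leq_trans (ind t (leqnn t)) _.
apply: leq_trans (_ : (cl #|Q| <= _)%N).
  apply: cl_dvd => //; exact: group_dvd (gH t (leqnn t)) gQ HtQ.
rewrite -cl_exp //; apply: cl_dvd => //; by rewrite expn_gt0.
Qed.
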